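(* For a regular $T_1$-space $X$ the following are equivalent: (1) $X$ is metrizable; (2) $X$ has a base which is $\sigma$-discrete at non-isolated points; (3) $X$ has a base which is $\sigma$-locally finite at non-isolated points.
   Context: $I(X)$ is the set of isolated points. A family is locally finite (resp. discrete) at non-isolated points if each $x\in X\setminus I(X)$ has a neighborhood meeting at most finitely many (resp. at most one) of its members. A base $\mathcal{B}=\bigcup_{i\in\mathbb{N}}\mathcal{B}_i$ is $\sigma$-locally finite (resp. $\sigma$-discrete) at non-isolated points if each $\mathcal{B}_i$ is locally finite (resp. discrete) at non-isolated points. *)

(* Defs.v *)
From Stdlib Require Import Reals List.
Open Scope R_scope.

Record topology (X : Type) := {
  is_open : (X -> Prop) -> Prop;
  open_full : is_open (fun _ => True);
  open_inter : forall U V, is_open U -> is_open V -> is_open (fun x => U x /\ V x);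
  open_union : forall F : (X -> Prop) -> Prop,
      (forall U, F U -> is_open U) -> is_open (fun x => exists U, F U /\ U x)
}.
Arguments is_open {X} t U.

Definition is_closed {X} (t : topology X) (F : X -> Prop) : Prop :=
  is_open t (fun x => ~ F x).

Definition T1_space {X} (t : topology X) : Prop :=
  forall x y : X, x <> y -> exists U, is_open t U /\ U x /\ ~ U y.

Definition regular_space {X} (t : topology X) : Prop :=
  forall (x : X) (F : X -> Prop), is_closed t F -> ~ F x ->
    exists U V, is_open t U /\ is_open t V /\ U x /\ (forall y, F y -> V y) /\
                (forall y, ~ (U y /\ V y)).

Definition is_metric {X} (d : X -> X -> R) : Prop :=
  (forall x y, d x y = 0 <-> x = y) /\
  (forall x y, d x y = d y x) /\
  (forall x y z, d x z <= d x y + d y z).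

Definition metric_open {X} (d : X -> X -> R) (U : X -> Prop) : Prop :=
  forall x, U x -> exists eps, 0 < eps /\ forall y, d x y < eps -> U y.

Definition metrizable {X} (t : topology X) : Prop :=
  exists d : X -> X -> R, is_metric d /\ forall U, is_open t U <-> metric_open d U.

Definition isolated {X} (t : topology X) (x : X) : Prop :=
  is_open t (fun y => y = x).

Definition meets {X} (A W : X -> Prop) : Prop := exists y, A y /\ W y.

Definition locally_finite_nonisol {X} (t : topology X) (F : (X -> Prop) -> Prop) : Prop :=
  forall x, ~ isolated t x ->
    exists W, is_open t W /\ W x /\
      exists l : list (X -> Prop), forall A, F A -> meets A W -> In A l.

Definition discrete_nonisol {X} (t : topology X) (F : (X -> Prop) -> Prop) : Prop :=
  forall x, ~ isolated t x ->
    exists W, is_open t W /\ W x /\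
      forall A B, F A -> F B -> meets A W -> meets B W -> A = B.

Definition is_base {X} (t : topology X) (B : (X -> Prop) -> Prop) : Prop :=
  (forall U, B U -> is_open t U) /\
  (forall U x, is_open t U -> U x -> exists V, B V /\ V x /\ forall y, V y -> U y).

Definition sigma_union {X} (Bs : nat -> (X -> Prop) -> Prop) : (X -> Prop) -> Prop :=
  fun U => exists i, Bs i U.

Definition has_sigma_discrete_base_nonisol {X} (t : topology X) : Prop :=
  exists Bs : nat -> (X -> Prop) -> Prop,
    is_base t (sigma_union Bs) /\ forall i, discrete_nonisol t (Bs i).

Definition has_sigma_locally_finite_base_nonisol {X} (t : topology X) : Prop :=
  exists Bs : nat -> (X -> Prop) -> Prop,
    is_base t (sigma_union Bs) /\ forall i, locally_finite_nonisol t (Bs i).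

(* Main.v *)
Module WO.
From mathcomp Require Import ssreflect ssrfun ssrbool eqtype boolp wochoice.
Lemma wo_exists (X : Type) : exists R : X -> X -> Prop,
  (forall x y, R x y \/ R y x) /\ (forall x y, R x y -> R y x -> x = y) /\
  (forall P : X -> Prop, (exists x, P x) -> exists z, P z /\ forall y, P y -> R z y).
Proof.
have [R Rwo] := well_ordering_principle {classic X}.
have key : forall P : X -> Prop, (exists x, P x) -> exists z, P z /\ (forall y, P y -> R z y) /\
   forall z', P z' -> (forall y, P y -> R z' y) -> z' = z.
  move=> P [x Px].
  have [z [[zin lb] uz]] := Rwo (fun x : {classic X} => `[< P x >]) (ex_intro _ x (introT (asboolP _) Px)).
  exists z; split; first exact: (elimT (asboolP _) zin).
  split; first by move=> y Py; apply: lb; exact: (introT (asboolP _) Py).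
  move=> z' Pz' lb'; symmetry; apply: uz; split; first exact: (introT (asboolP _) Pz').
  by move=> y /asboolP Py; apply: lb'.
exists (fun x y => R x y = true).
have tot : forall x y, R x y \/ R y x.
  move=> x y; have [z [zin [lb _]]] := key (fun u => u = x \/ u = y) (ex_intro _ x (or_introl erefl)).
  case: zin => Hz; [left|right]; rewrite -Hz; apply: lb; auto.
split; first exact: tot.
split.
  move=> x y Rxy Ryx; have [z [_ [_ uz]]] := key (fun u => u = x \/ u = y) (ex_intro _ x (or_introl erefl)).
  have Rxx : R x x by case: (tot x x).
  have Ryy : R y y by case: (tot y y).
  rewrite (uz x); [ | by left | by move=> u [->|->]].
  by rewrite (uz y); [ | by right | by move=> u [->|->]].
move=> P ex; have [z [Pz [lb _]]] := key P ex.
by exists z.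
Qed.
End WO.

Require Import Defs.
From Stdlib Require Import Reals List Lra Lia Classical ClassicalEpsilon FunctionalExtensionality PropExtensionality Cantor.
Open Scope R_scope.

Section Gen.
Context {X : Type} (t : topology X).

Lemma open_ext (U V : X -> Prop) : is_open t U -> (forall x, U x <-> V x) -> is_open t V.
Proof.
  intros HU H. assert (E : U = V).
  { apply functional_extensionality; intro x; apply propositional_extensionality; apply H. }
  subst; exact HU.
Qed.

Lemma open_local (U : X -> Prop) :
  (forall x, U x -> exists W, is_open t W /\ W x /\ forall y, W y -> U y) -> is_open t U.
Proof.
  intros H.
  apply open_ext with (U := fun x => exists W, (is_open t W /\ forall y, W y -> U y) /\ W x).
  - apply open_union. intros W [HW _]; exact HW.
  - intros x; split.
    + intros [W [[_ HW] Wx]]; auto.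
    + intros Ux; destruct (H x Ux) as [W [HW [Wx HWU]]]; exists W; auto.
Qed.

Lemma open_empty : is_open t (fun _ => False).
Proof. apply open_local. intros x []. Qed.

Lemma open_inter' (U V : X -> Prop) : is_open t U -> is_open t V -> is_open t (fun x => U x /\ V x).
Proof. apply open_inter. Qed.

Lemma closed_compl_open (U : X -> Prop) : is_open t U -> is_closed t (fun x => ~ U x).
Proof.
  intros H; unfold is_closed; apply open_ext with (U := U); auto.
  intros x; split; intros; [tauto | apply NNPP; auto].
Qed.

Lemma fin_inter {A : Type} (x : X) (P : A -> (X -> Prop) -> Prop) (l : list A) :
  (forall a W W', P a W -> (forall y, W' y -> W y) -> P a W') ->
  (forall a, In a l -> exists W, is_open t W /\ W x /\ P a W) ->
  exists W, is_open t W /\ W x /\ forall a, In a l -> P a W.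
Proof.
  intros Hm; induction l as [|a l IH]; intros H.
  - exists (fun _ => True); split; [apply open_full|]; split; auto. intros a [].
  - destruct IH as [W1 [HW1 [W1x HP1]]]. { intros b Hb; apply H; simpl; auto. }
    destruct (H a (or_introl eq_refl)) as [W2 [HW2 [W2x HP2]]].
    exists (fun y => W1 y /\ W2 y); split; [apply open_inter; auto|]; split; auto.
    intros b [<-|Hb].
    + apply Hm with W2; auto. intros y [_ ?]; auto.
    + apply Hm with W1; auto. intros y [? _]; auto.
Qed.

Definition cl (A : X -> Prop) (x : X) : Prop :=
  forall U, is_open t U -> U x -> meets A U.

Lemma cl_incl (A : X -> Prop) x : A x -> cl A x.
Proof. intros Ax U _ Ux; exists x; auto. Qed.

Lemma lf_cl_closed (G : (X -> Prop) -> Prop) (Q : (X -> Prop) -> Prop) :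
  locally_finite_nonisol t G ->
  is_closed t (fun x => exists B, G B /\ Q B /\ cl B x).
Proof.
  intros Hlf. unfold is_closed. apply open_local. intros x Hx.
  destruct (classic (isolated t x)) as [Hi|Hi].
  - exists (fun y => y = x); split; auto; split; auto. intros y ->; auto.
  - destruct (Hlf x Hi) as [W [HW [Wx [l Hl]]]].
    destruct (fin_inter x (fun B W' => G B -> Q B -> ~ meets B W') l) as [W' [HW' [W'x HP]]].
    + intros a W1 W2 H1 H12 Ga Qa [z [az W2z]]. apply (H1 Ga Qa); exists z; auto.
    + intros B _. destruct (classic (G B /\ Q B /\ cl B x)) as [Hc|Hc].
      * exfalso; apply Hx; exists B; auto.
      * destruct (classic (G B /\ Q B)) as [[GB QB]|Hn].
        -- assert (~ cl B x) as Hncl by tauto.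
           unfold cl in Hncl. apply not_all_ex_not in Hncl. destruct Hncl as [U HU].
           exists U. split; [|split].
           ++ apply NNPP; intro; apply HU; intros; contradiction.
           ++ apply NNPP; intro; apply HU; intros; contradiction.
           ++ intros _ _ Hm; apply HU; intros; auto.
        -- exists (fun _ => True); split; [apply open_full|]; split; auto.
    + exists (fun y => W y /\ W' y); split; [apply open_inter; auto|]; split; auto.
      intros y [Wy W'y] [B [GB [QB clB]]].
      destruct (clB (fun y => W y /\ W' y)) as [z [Bz [Wz W'z]]]; [apply open_inter; auto| auto|].
      assert (In B l) by (apply Hl; auto; exists z; auto).
      apply (HP B H GB QB). exists z; auto.
Qed.

End Gen.

Section NS.
Context {X : Type} (t : topology X).
Hypothesis HT1 : T1_space t.
Hypothesis Hreg : regular_space t.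
Variable Bs : nat -> (X -> Prop) -> Prop.
Hypothesis Hbase : is_base t (sigma_union Bs).
Hypothesis Hlf : forall i, locally_finite_nonisol t (Bs i).

Lemma Bs_open n B : Bs n B -> is_open t B.
Proof. intros H; apply (proj1 Hbase); exists n; auto. Qed.

Lemma reg_pt (U : X -> Prop) x : is_open t U -> U x ->
  exists m C, Bs m C /\ C x /\ forall y, cl t C y -> U y.
Proof.
  intros HU Ux.
  destruct (Hreg x (fun y => ~ U y)) as [U' [V' [HU' [HV' [U'x [HFV Hdis]]]]]].
  - apply closed_compl_open; auto.
  - tauto.
  - destruct (proj2 Hbase U' x HU' U'x) as [C [[m HC] [Cx HCU]]].
    exists m, C; split; auto; split; auto.
    intros y Hcl. apply NNPP; intro nUy.
    destruct (Hcl V' HV' (HFV y nUy)) as [z [Cz V'z]].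
    apply (Hdis z); auto.
Qed.

Definition PP (S : X -> Prop) n := fun x => exists B, Bs n B /\ (forall y, cl t B y -> ~ S y) /\ B x.
Definition KK (S : X -> Prop) n := fun x => exists B, Bs n B /\ (forall y, cl t B y -> ~ S y) /\ cl t B x.
Definition II (S : X -> Prop) n := fun x => forall k, (k <= n)%nat -> ~ KK S k x.

Lemma PP_open S n : is_open t (PP S n).
Proof.
  apply open_local. intros x [B [HB [HQ Bx]]]. exists B; split; [eapply Bs_open; eauto|]; split; auto.
  intros y By; exists B; auto.
Qed.

Lemma KK_closed S n : is_closed t (KK S n).
Proof. apply (lf_cl_closed t (Bs n) (fun B => forall y, cl t B y -> ~ S y)); auto. Qed.

Lemma PP_KK S n x : PP S n x -> KK S n x.
Proof. intros [B [? [? ?]]]; exists B; split; auto; split; auto; apply cl_incl; auto. Qed.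

Lemma KK_S S n x : KK S n x -> ~ S x.
Proof. intros [B [_ [HQ Hc]]]; apply HQ; auto. Qed.

Lemma PP_cover S x : is_closed t S -> ~ S x -> exists n, PP S n x.
Proof.
  intros HS nSx. destruct (reg_pt (fun y => ~ S y) x HS nSx) as [m [C [HC [Cx HCl]]]].
  exists m, C; auto.
Qed.

Lemma II_open S n : is_open t (II S n).
Proof.
  induction n.
  - apply open_ext with (U := fun x => ~ KK S 0 x); [apply KK_closed|].
    intros x; split; intros H.
    + intros k Hk; assert (k = 0)%nat by lia; subst; auto.
    + apply H; auto.
  - apply open_ext with (U := fun x => II S n x /\ ~ KK S (Datatypes.S n) x).
    + apply open_inter; auto; apply KK_closed.
    + intros x; split.
      * intros [H1 H2] k Hk. destruct (Nat.eq_dec k (Datatypes.S n)); [subst; auto|apply H1; lia].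
      * intros H; split; [intros k Hk; apply H; lia| apply H; auto].
Qed.

Lemma normal (A C : X -> Prop) : is_closed t A -> is_closed t C -> (forall x, A x -> C x -> False) ->
  exists U V, is_open t U /\ is_open t V /\ (forall x, A x -> U x) /\ (forall x, C x -> V x) /\
    (forall x, U x -> V x -> False).
Proof.
  intros HA HC Hdis.
  exists (fun x => exists n, PP C n x /\ II A n x), (fun x => exists n, PP A n x /\ II C n x).
  split; [|split; [|split; [|split]]].
  - apply open_local. intros x [n [H1 H2]]. exists (fun y => PP C n y /\ II A n y).
    split; [apply open_inter; [apply PP_open|apply II_open]|]; split; auto.
    intros y Hy; exists n; auto.
  - apply open_local. intros x [n [H1 H2]]. exists (fun y => PP A n y /\ II C n y).
    split; [apply open_inter; [apply PP_open|apply II_open]|]; split; auto.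
    intros y Hy; exists n; auto.
  - intros x Ax. destruct (PP_cover C x HC) as [n Hn]. { intro; eapply Hdis; eauto. }
    exists n; split; auto. intros k _ HK. apply (KK_S A k x HK Ax).
  - intros x Cx. destruct (PP_cover A x HA) as [n Hn]. { intro; eapply Hdis; eauto. }
    exists n; split; auto. intros k _ HK. apply (KK_S C k x HK Cx).
  - intros x [n [P1 I1]] [m [P2 I2]]. destruct (Nat.le_ge_cases n m).
    + apply (I2 n); auto. apply PP_KK; auto.
    + apply (I1 m); auto. apply PP_KK; auto.
Qed.

Lemma shrink (F G : X -> Prop) : is_closed t F -> is_open t G -> (forall x, F x -> G x) ->
  exists O K, is_open t O /\ is_closed t K /\ (forall x, F x -> O x) /\ (forall x, O x -> K x) /\
    (forall x, K x -> G x).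
Proof.
  intros HF HG HFG.
  destruct (normal F (fun x => ~ G x) HF (closed_compl_open t G HG)) as [U [V [HU [HV [H1 [H2 H3]]]]]].
  { intros x Fx nG; apply nG; auto. }
  exists U, (fun x => ~ V x). split; auto; split; [apply closed_compl_open; auto|].
  split; auto; split.
  - intros x Ux Vx; eapply H3; eauto.
  - intros x nV; apply NNPP; intro nG; apply nV; auto.
Qed.

End NS.

Fixpoint ssum (g : nat -> R) (N : nat) : R :=
  match N with O => 0 | S N' => ssum g N' + g N' end.

Lemma ssum_le g g' N : (forall k, (k < N)%nat -> g k <= g' k) -> ssum g N <= ssum g' N.
Proof. induction N; cbn [ssum]; intros H; [simpl; lra|]. assert (H1 := H N (Nat.lt_succ_diag_r N)).
  assert (ssum g N <= ssum g' N) by (apply IHN; intros; apply H; lia). lra. Qed.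

Lemma ssum_plus f g N : ssum (fun k => f k + g k) N = ssum f N + ssum g N.
Proof. induction N; simpl; [lra|]. rewrite IHN; lra. Qed.

Lemma ssum_double g N : ssum g (2 * N) = ssum (fun k => g (2 * k)%nat + g (S (2 * k))) N.
Proof.
  induction N; [reflexivity|].
  replace (2 * S N)%nat with (S (S (2 * N))) by lia. cbn [ssum]. rewrite IHN. ring.
Qed.

Lemma ssum_shift g N : ssum (fun k => g (S k)) N = ssum g N - g O + g N.
Proof. induction N; simpl; [lra|]. rewrite IHN; lra. Qed.

Lemma ssum_bounds g N : (forall k, (k < N)%nat -> 0 <= g k <= 1) -> 0 <= ssum g N <= INR N.
Proof.
  induction N; cbn [ssum]; intros H; [simpl; lra|]. assert (H1 := H N (Nat.lt_succ_diag_r N)).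
  assert (0 <= ssum g N <= INR N) by (apply IHN; intros; apply H; lia).
  rewrite S_INR; lra.
Qed.

Lemma ssum_const g N c : (forall k, (k < N)%nat -> g k = c) -> ssum g N = INR N * c.
Proof.
  induction N; cbn [ssum]; intros H; [simpl; lra|]. rewrite IHN by (intros; apply H; lia).
  rewrite (H N) by lia. rewrite S_INR; lra.
Qed.

Definition ind (P : Prop) : R := if excluded_middle_informative P then 1 else 0.

Lemma ind_le (P Q : Prop) : (P -> Q) -> ind P <= ind Q.
Proof. unfold ind; intros H; destruct (excluded_middle_informative P); destruct (excluded_middle_informative Q); try lra; tauto. Qed.

Lemma ind_bounds P : 0 <= ind P <= 1.
Proof. unfold ind; destruct (excluded_middle_informative P); lra. Qed.

Lemma ind_true (P : Prop) : P -> ind P = 1.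
Proof. unfold ind; destruct (excluded_middle_informative P); tauto. Qed.

Lemma ind_false (P : Prop) : ~ P -> ind P = 0.
Proof. unfold ind; destruct (excluded_middle_informative P); tauto. Qed.

Lemma even_double k : Nat.even (2 * k) = true.
Proof. induction k; auto. replace (2 * S k)%nat with (S (S (2 * k))) by lia. simpl; auto. Qed.

Lemma even_sdouble k : Nat.even (S (2 * k)) = false.
Proof. induction k; auto. replace (S (2 * S k))%nat with (S (S (S (2 * k)))) by lia. simpl; auto. Qed.

Definition cont {X} (t : topology X) (h : X -> R) : Prop :=
  forall x eps, 0 < eps -> exists W, is_open t W /\ W x /\ forall y, W y -> Rabs (h y - h x) < eps.

Lemma two_pow_large eps : 0 < eps -> exists n, / 2 ^ n < eps.
Proof.
  intros He. destruct (INR_unbounded (/ eps)) as [n Hn].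
  exists n. assert (Hp : INR n < 2 ^ n).
  { clear. induction n; [simpl; lra|]. rewrite S_INR. simpl pow. assert (1 <= 2 ^ n) by (apply pow_R1_Rle; lra). lra. }
  assert (0 < / eps) by (apply Rinv_0_lt_compat; auto).
  assert (0 < 2 ^ n) by (apply pow_lt; lra).
  rewrite <- (Rinv_inv eps). apply Rinv_lt_contravar; [apply Rmult_lt_0_compat|]; lra.
Qed.

Section Ury.
Context {X : Type} (t : topology X).
Hypothesis Hsh : forall F G : X -> Prop, is_closed t F -> is_open t G -> (forall x, F x -> G x) ->
  exists O K, is_open t O /\ is_closed t K /\ (forall x, F x -> O x) /\ (forall x, O x -> K x) /\
    (forall x, K x -> G x).

Definition shP (A B : X -> Prop) (p : (X -> Prop) * (X -> Prop)) : Prop :=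
  is_open t (fst p) /\ is_closed t (snd p) /\ (forall x, A x -> fst p x) /\
  (forall x, fst p x -> snd p x) /\ (forall x, snd p x -> B x).

Definition sh (A B : X -> Prop) := epsilon (inhabits (B, fun _ => True)) (shP A B).

Lemma sh_spec A B : is_closed t A -> is_open t B -> (forall x, A x -> B x) -> shP A B (sh A B).
Proof.
  intros HA HB HAB. unfold sh. apply epsilon_spec. destruct (Hsh A B HA HB HAB) as [O [K H]].
  exists (O, K); exact H.
Qed.

Variables F G : X -> Prop.
Hypothesis HF : is_closed t F.
Hypothesis HG : is_open t G.
Hypothesis HFG : forall x, F x -> G x.

Fixpoint lev (n : nat) : nat -> (X -> Prop) * (X -> Prop) :=
  match n with
  | O => fun j => match j with O => sh F G | _ => (G, fun _ => True) end
  | S n' => fun j => if Nat.even j then lev n' (Nat.div2 j)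
                     else sh (snd (lev n' (Nat.div2 j))) (fst (lev n' (S (Nat.div2 j))))
  end.

Definition OO n j := fst (lev n j).
Definition KO n j := snd (lev n j).

Lemma lev_even n k : lev (S n) (2 * k) = lev n k.
Proof. cbn [lev]. rewrite even_double, Nat.div2_double. reflexivity. Qed.

Lemma lev_odd n k : lev (S n) (S (2 * k)) = sh (KO n k) (OO n (S k)).
Proof. cbn [lev]. rewrite even_sdouble, Nat.div2_succ_double. reflexivity. Qed.

Definition Inv n : Prop :=
  (forall j, (j <= 2 ^ n)%nat -> is_open t (OO n j)) /\
  (forall j, (j < 2 ^ n)%nat -> is_closed t (KO n j) /\ (forall x, OO n j x -> KO n j x) /\
       (forall x, KO n j x -> OO n (S j) x)) /\
  (forall x, F x -> OO n O x) /\ OO n (2 ^ n) = G.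

Lemma Inv_odd n k : Inv n -> (k < 2 ^ n)%nat -> shP (KO n k) (OO n (S k)) (sh (KO n k) (OO n (S k))).
Proof.
  intros [H1 [H2 _]] Hk. destruct (H2 k Hk) as [? [? ?]]. apply sh_spec; auto; apply H1; lia.
Qed.

Lemma Inv_all n : Inv n.
Proof.
  induction n.
  - destruct (sh_spec F G HF HG HFG) as [h1 [h2 [h3 [h4 h5]]]].
    split; [|split; [|split]].
    + intros j Hj. destruct j; [exact h1|]. destruct j; [exact HG|simpl in Hj; lia].
    + intros j Hj. simpl in Hj. assert (j = O) by lia. subst. split; auto.
    + exact h3.
    + reflexivity.
  - assert (IH := IHn). destruct IHn as [H1 [H2 [H3 H4]]].
    unfold Inv; rewrite Nat.pow_succ_r'. split; [|split; [|split]].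
    + intros j Hj. destruct (Nat.Even_or_Odd j) as [[k ->]|[k ->]].
      * unfold OO; rewrite lev_even. apply H1; lia.
      * replace (2 * k + 1)%nat with (S (2 * k)) by lia.
        unfold OO; rewrite lev_odd. apply (Inv_odd n k IH). lia.
    + intros j Hj. destruct (Nat.Even_or_Odd j) as [[k ->]|[k ->]].
      * destruct (H2 k) as [h1 [h2 h3]]; [lia|].
        destruct (Inv_odd n k IH) as [g1 [g2 [g3 [g4 g5]]]]; [lia|].
        unfold OO, KO; rewrite lev_even, lev_odd. split; auto.
      * replace (2 * k + 1)%nat with (S (2 * k)) by lia.
        destruct (Inv_odd n k IH) as [g1 [g2 [g3 [g4 g5]]]]; [lia|].
        unfold OO, KO. rewrite lev_odd. replace (S (S (2 * k))) with (2 * S k)%nat by lia.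
        rewrite lev_even. split; auto.
    + intros x Fx. change O with (2 * 0)%nat. unfold OO; rewrite lev_even. apply H3; auto.
    + unfold OO; rewrite lev_even. apply H4.
Qed.

Lemma OO_mono n j j' x : (j <= j')%nat -> (j' <= 2 ^ n)%nat -> OO n j x -> OO n j' x.
Proof.
  intros Hjj' Hj'. induction Hjj'; auto.
  intros H. destruct (Inv_all n) as [_ [H2 _]]. destruct (H2 m) as [_ [a b]]; [lia|].
  apply b, a, IHHjj'; [lia|auto].
Qed.

Lemma OO_sub_G n j x : (j <= 2 ^ n)%nat -> OO n j x -> G x.
Proof.
  intros Hj H. destruct (Inv_all n) as [_ [_ [_ H4]]]. rewrite <- H4. apply OO_mono with j; auto.
Qed.

Definition cc n x := ssum (fun j => ind (OO n j x)) (2 ^ n).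

Lemma cc_step n x : 2 * cc n x <= cc (S n) x <= 2 * cc n x + 1.
Proof.
  unfold cc. rewrite Nat.pow_succ_r', ssum_double.
  assert (Hk : forall k, (k < 2 ^ n)%nat -> (OO n k x -> OO (S n) (S (2 * k)) x) /\
                                         (OO (S n) (S (2 * k)) x -> OO n (S k) x)).
  { intros k Hk. destruct (Inv_odd n k (Inv_all n) Hk) as [g1 [g2 [g3 [g4 g5]]]].
    destruct (Inv_all n) as [_ [H2 _]]. destruct (H2 k Hk) as [_ [a _]].
    unfold OO at 2 3; rewrite lev_odd. split; intros; auto. }
  split.
  - replace (2 * ssum (fun j => ind (OO n j x)) (2 ^ n)) with
      (ssum (fun k => ind (OO n k x) + ind (OO n k x)) (2 ^ n)) by (rewrite ssum_plus; lra).
    apply ssum_le. intros k Hkk. unfold OO at 3; rewrite lev_even.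
    destruct (Hk k Hkk). assert (ind (OO n k x) <= ind (OO (S n) (S (2 * k)) x)) by (apply ind_le; auto).
    unfold OO in *; lra.
  - apply Rle_trans with (ssum (fun k => ind (OO n k x) + ind (OO n (S k) x)) (2 ^ n)).
    + apply ssum_le. intros k Hkk. unfold OO at 1; rewrite lev_even.
      destruct (Hk k Hkk). assert (ind (OO (S n) (S (2 * k)) x) <= ind (OO n (S k) x)) by (apply ind_le; auto).
      unfold OO in *; lra.
    + rewrite ssum_plus, (ssum_shift (fun j => ind (OO n j x))).
      assert (h1 := ind_bounds (OO n O x)). assert (h2 := ind_bounds (OO n (2 ^ n) x)). lra.
Qed.

Lemma cc_bounds n x : 0 <= cc n x <= 2 ^ n.
Proof.
  unfold cc. replace (2 ^ n) with (INR (2 ^ n)) by (rewrite pow_INR; simpl; f_equal; lra).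
  apply ssum_bounds. intros; apply ind_bounds.
Qed.

Definition hn n x := cc n x / 2 ^ n.

Lemma pow2_pos n : 0 < 2 ^ n.
Proof. apply pow_lt; lra. Qed.

Lemma hn_step n x : hn n x <= hn (S n) x <= hn n x + / 2 ^ (S n).
Proof.
  unfold hn. destruct (cc_step n x). assert (P := pow2_pos n). simpl pow.
  split.
  - apply (Rmult_le_reg_r (2 * 2 ^ n)); [lra|]. field_simplify; lra.
  - apply (Rmult_le_reg_r (2 * 2 ^ n)); [lra|]. field_simplify; lra.
Qed.

Lemma hn_bounds n x : 0 <= hn n x <= 1.
Proof.
  unfold hn. destruct (cc_bounds n x). assert (P := pow2_pos n). split.
  - unfold Rdiv; apply Rmult_le_pos; [lra| apply Rlt_le, Rinv_0_lt_compat; lra].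
  - apply (Rmult_le_reg_r (2 ^ n)); [lra|]. field_simplify; lra.
Qed.

Lemma hn_mono n k x : hn n x <= hn (n + k) x <= hn n x + / 2 ^ n - / 2 ^ (n + k).
Proof.
  induction k.
  - rewrite Nat.add_0_r; lra.
  - rewrite Nat.add_succ_r. destruct (hn_step (n + k) x).
    assert (E : / 2 ^ S (n + k) = / 2 ^ (n + k) / 2) by (simpl; field; apply pow_nonzero; lra).
    rewrite E in *. lra.
Qed.

Lemma hn_F n x : F x -> hn n x = 1.
Proof.
  intros Fx. unfold hn, cc. rewrite (ssum_const _ _ 1).
  - rewrite pow_INR. replace (INR 2) with 2 by (simpl; lra). field. apply pow_nonzero; lra.
  - intros k Hk. apply ind_true. apply OO_mono with O; [lia|lia|]. destruct (Inv_all n) as [_ [_ [H3 _]]]; auto.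
Qed.

Lemma hn_G n x : ~ G x -> hn n x = 0.
Proof.
  intros nG. unfold hn, cc. rewrite (ssum_const _ _ 0).
  - unfold Rdiv; ring.
  - intros k Hk. apply ind_false. intro H. apply nG. apply OO_sub_G with n k; auto; lia.
Qed.

Lemma hn_near n x : exists W, is_open t W /\ W x /\ forall y, W y -> Rabs (hn n y - hn n x) <= / 2 ^ n.
Proof.
  destruct (fin_inter t x (fun k W => forall y, W y -> (OO n k x -> OO n (S k) y) /\ (OO n k y -> OO n (S k) x))
     (seq 0 (2 ^ n))) as [W [HW [Wx HP]]].
  - intros a W1 W2 H1 H12 y Wy. apply H1; auto.
  - intros k Hk. apply in_seq in Hk. destruct (Inv_all n) as [H1 [H2 _]].
    destruct (H2 k) as [c1 [c2 c3]]; [lia|].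
    destruct (classic (OO n k x)) as [Ox|nOx].
    + exists (OO n (S k)). split; [apply H1; lia|]. split; auto.
    + destruct (classic (OO n (S k) x)) as [Ox'|nOx'].
      * exists (fun _ => True); split; [apply open_full|]; split; auto. intros; split; auto; intro; contradiction.
      * exists (fun y => ~ KO n k y). split; [exact c1|]. split; [intro; apply nOx'; auto|].
        intros y Hy; split; [intro; contradiction|]. intro Hyk; exfalso; apply Hy; auto.
  - exists W; split; auto; split; auto. intros y Wy.
    assert (Hc : forall a b, (forall k, (k < 2 ^ n)%nat -> (OO n k a -> OO n (S k) b)) -> cc n a <= cc n b + 1).
    { intros a b Hab. unfold cc.
      apply Rle_trans with (ssum (fun k => ind (OO n (S k) b)) (2 ^ n)).
      - apply ssum_le; intros; apply ind_le; auto.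
      - rewrite (ssum_shift (fun j => ind (OO n j b))).
        assert (h1 := ind_bounds (OO n O b)). assert (h2 := ind_bounds (OO n (2 ^ n) b)). lra. }
    assert (A1 : cc n x <= cc n y + 1).
    { apply Hc. intros k Hk. apply (HP k); auto. apply in_seq; lia. }
    assert (A2 : cc n y <= cc n x + 1).
    { apply Hc. intros k Hk. apply (HP k); auto. apply in_seq; lia. }
    unfold hn. assert (P := pow2_pos n).
    replace (cc n y / 2 ^ n - cc n x / 2 ^ n) with ((cc n y - cc n x) * / 2 ^ n) by (field; lra).
    rewrite Rabs_mult, (Rabs_right (/ 2 ^ n)) by (apply Rle_ge, Rlt_le, Rinv_0_lt_compat; lra).
    rewrite <- (Rmult_1_l (/ 2 ^ n)) at 2. apply Rmult_le_compat_r; [apply Rlt_le, Rinv_0_lt_compat; lra|].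
    apply Rabs_le; lra.
Qed.

Definition hE x := fun r => exists n, r = hn n x.

Lemma hE_bound x : bound (hE x).
Proof. exists 1. intros r [n ->]. apply hn_bounds. Qed.

Lemma hE_ne x : exists r, hE x r.
Proof. exists (hn O x), O; auto. Qed.

Definition hU x : R := proj1_sig (completeness (hE x) (hE_bound x) (hE_ne x)).

Lemma hU_lub x : is_lub (hE x) (hU x).
Proof. unfold hU; destruct completeness; auto. Qed.

Lemma hU_approx n x : hn n x <= hU x <= hn n x + / 2 ^ n.
Proof.
  destruct (hU_lub x) as [H1 H2]. split.
  - apply H1; exists n; auto.
  - apply H2. intros r [m ->]. destruct (Nat.le_ge_cases m n).
    + replace n with (m + (n - m))%nat by lia. destruct (hn_mono m (n - m) x).
      assert (0 < / 2 ^ (m + (n - m))) by (apply Rinv_0_lt_compat, pow2_pos). lra.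
    + replace m with (n + (m - n))%nat by lia. destruct (hn_mono n (m - n) x).
      assert (0 < / 2 ^ (n + (m - n))) by (apply Rinv_0_lt_compat, pow2_pos). lra.
Qed.

Lemma urysohn_fun : (forall x, 0 <= hU x <= 1) /\ (forall x, F x -> hU x = 1) /\
  (forall x, ~ G x -> hU x = 0) /\ cont t hU.
Proof.
  split; [|split; [|split]].
  - intros x. destruct (hU_lub x) as [H1 H2]. split.
    + apply Rle_trans with (hn O x); [apply hn_bounds|apply H1; exists O; auto].
    + apply H2. intros r [n ->]; apply hn_bounds.
  - intros x Fx. destruct (hU_lub x) as [H1 H2]. apply Rle_antisym.
    + apply H2. intros r [n ->]; apply hn_bounds.
    + rewrite <- (hn_F O x Fx). apply H1; exists O; auto.
  - intros x nG. destruct (hU_lub x) as [H1 H2]. apply Rle_antisym.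
    + apply H2. intros r [n ->]; rewrite (hn_G n x nG); lra.
    + rewrite <- (hn_G O x nG). apply H1; exists O; auto.
  - intros x eps He. destruct (two_pow_large (eps / 3)) as [n Hn]; [lra|].
    destruct (hn_near n x) as [W [HW [Wx HWn]]]. exists W; split; auto; split; auto.
    intros y Wy. assert (A := HWn y Wy). destruct (hU_approx n x). destruct (hU_approx n y).
    assert (0 < / 2 ^ n) by (apply Rinv_0_lt_compat, pow2_pos).
    revert A; unfold Rabs; destruct (Rcase_abs _); destruct (Rcase_abs _); intros; lra.
Qed.

Definition ury_prop (h : X -> R) : Prop := (forall x, 0 <= h x <= 1) /\ (forall x, F x -> h x = 1) /\
  (forall x, ~ G x -> h x = 0) /\ cont t h.

Lemma urysohn : exists h, ury_prop h.
Proof. exists hU; apply urysohn_fun. Qed.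
End Ury.

Section Metr.
Context {X : Type} (t : topology X).
Hypothesis HT1 : T1_space t.
Hypothesis Hreg : regular_space t.
Variable Bs : nat -> (X -> Prop) -> Prop.
Hypothesis Hbase : is_base t (sigma_union Bs).
Hypothesis Hlf : forall i, locally_finite_nonisol t (Bs i).

Definition FF (n m : nat) (B : X -> Prop) : X -> Prop :=
  fun x => exists C, Bs m C /\ (forall y, cl t C y -> B y) /\ cl t C x.

Definition hh n m B : X -> R :=
  epsilon (inhabits (fun _ : X => 0)) (fun h => ury_prop t (FF n m B) B h).

Lemma hh_spec n m B : Bs n B -> ury_prop t (FF n m B) B (hh n m B).
Proof.
  intros HB. unfold hh. apply epsilon_spec. apply urysohn.
  - intros F0 G0 HF0 HG0 HFG0. eapply shrink; eauto.
  - apply (lf_cl_closed t (Bs m) (fun C => forall y, cl t C y -> B y)); auto.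
  - apply (proj1 Hbase). exists n; auto.
  - intros x [C [_ [H1 H2]]]; auto.
Qed.

Lemma hh_bounds n m B x : Bs n B -> 0 <= hh n m B x <= 1.
Proof. intros HB. destruct (hh_spec n m B HB) as [H _]; auto. Qed.

Definition term n m B x y := Rabs (hh n m B x - hh n m B y) / INR (S (n + m)).

Lemma INR_S_pos k : 1 <= INR (S k).
Proof. rewrite S_INR. assert (0 <= INR k) by apply pos_INR. lra. Qed.

Lemma term_bounds n m B x y : Bs n B -> 0 <= term n m B x y <= / INR (S (n + m)).
Proof.
  intros HB. unfold term. assert (h1 := hh_bounds n m B x HB). assert (h2 := hh_bounds n m B y HB).
  assert (P := INR_S_pos (n + m)).
  assert (Ra : 0 <= Rabs (hh n m B x - hh n m B y) <= 1).
  { split; [apply Rabs_pos|]. unfold Rabs; destruct (Rcase_abs _); lra. }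
  unfold Rdiv. split.
  - apply Rmult_le_pos; [lra|apply Rlt_le, Rinv_0_lt_compat; lra].
  - rewrite <- (Rmult_1_l (/ INR (S (n + m)))) at 2. apply Rmult_le_compat_r; [apply Rlt_le, Rinv_0_lt_compat; lra|lra].
Qed.

Definition EE x y := fun r => r = 0 \/ exists n m B, Bs n B /\ r = term n m B x y.

Lemma EE_bound x y : bound (EE x y).
Proof.
  exists 1. intros r [->|[n [m [B [HB ->]]]]]; [lra|].
  destruct (term_bounds n m B x y HB). assert (P := INR_S_pos (n + m)).
  assert (/ INR (S (n + m)) <= 1); [|lra].
  rewrite <- Rinv_1. apply Rinv_le_contravar; lra.
Qed.

Lemma EE_ne x y : exists r, EE x y r.
Proof. exists 0; left; auto. Qed.

Definition dd x y : R := proj1_sig (completeness (EE x y) (EE_bound x y) (EE_ne x y)).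

Lemma dd_lub x y : is_lub (EE x y) (dd x y).
Proof. unfold dd; destruct completeness; auto. Qed.

Lemma dd_ub x y r : EE x y r -> r <= dd x y.
Proof. intros; apply (proj1 (dd_lub x y)); auto. Qed.

Lemma dd_le x y M : (forall r, EE x y r -> r <= M) -> dd x y <= M.
Proof. intros; apply (proj2 (dd_lub x y)); auto. Qed.

Lemma dd_pos x y : 0 <= dd x y.
Proof. apply dd_ub; left; auto. Qed.

Lemma dd_term n m B x y : Bs n B -> term n m B x y <= dd x y.
Proof. intros; apply dd_ub; right; exists n, m, B; auto. Qed.

Lemma base_pt (U : X -> Prop) x : is_open t U -> U x ->
  exists n m B, Bs n B /\ (forall y, B y -> U y) /\ hh n m B x = 1.
Proof.
  intros HU Ux. destruct (proj2 Hbase U x HU Ux) as [B [[n HB] [Bx HBU]]].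
  destruct (reg_pt t Hreg Bs Hbase B x) as [m [C [HC [Cx HCl]]]]; auto.
  { apply (proj1 Hbase); exists n; auto. }
  exists n, m, B; split; auto; split; auto.
  destruct (hh_spec n m B HB) as [_ [H1 _]]. apply H1. exists C; split; auto; split; auto.
  apply cl_incl; auto.
Qed.

Lemma dd_sep x y : dd x y = 0 -> x = y.
Proof.
  intros H0. apply NNPP; intro Hxy. destruct (HT1 x y Hxy) as [U [HU [Ux nUy]]].
  destruct (base_pt U x HU Ux) as [n [m [B [HB [HBU Hx]]]]].
  assert (Hy : hh n m B y = 0).
  { destruct (hh_spec n m B HB) as [_ [_ [H _]]]. apply H. intro; apply nUy; auto. }
  assert (T := dd_term n m B x y HB). unfold term in T. rewrite Hx, Hy in T.
  assert (P := INR_S_pos (n + m)).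
  rewrite Rminus_0_r, Rabs_R1 in T. assert (0 < 1 / INR (S (n + m))).
  { unfold Rdiv; apply Rmult_lt_0_compat; [lra|apply Rinv_0_lt_compat; lra]. }
  lra.
Qed.

Lemma dd_refl x : dd x x = 0.
Proof.
  apply Rle_antisym; [|apply dd_pos]. apply dd_le. intros r [->|[n [m [B [HB ->]]]]]; [lra|].
  unfold term. rewrite Rminus_diag, Rabs_R0. unfold Rdiv; rewrite Rmult_0_l; lra.
Qed.

Lemma dd_sym_le x y : dd x y <= dd y x.
Proof.
  apply dd_le. intros r [->|[n [m [B [HB ->]]]]]; [apply dd_pos|].
  unfold term. rewrite Rabs_minus_sym. apply (dd_term n m B y x HB).
Qed.

Lemma dd_tri x y z : dd x z <= dd x y + dd y z.
Proof.
  apply dd_le. intros r [->|[n [m [B [HB ->]]]]].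
  - assert (h1 := dd_pos x y); assert (h2 := dd_pos y z); lra.
  - assert (T1 := dd_term n m B x y HB). assert (T2 := dd_term n m B y z HB).
    assert (term n m B x z <= term n m B x y + term n m B y z); [|lra].
    unfold term, Rdiv. rewrite <- Rmult_plus_distr_r. apply Rmult_le_compat_r.
    + apply Rlt_le, Rinv_0_lt_compat. assert (P := INR_S_pos (n + m)); lra.
    + replace (hh n m B x - hh n m B z) with ((hh n m B x - hh n m B y) + (hh n m B y - hh n m B z)) by ring.
      apply Rabs_triang.
Qed.

Lemma nat_large eps : 0 < eps -> exists N, / INR (S N) < eps.
Proof.
  intros He. destruct (INR_unbounded (/ eps)) as [N HN]. exists N.
  assert (0 < / eps) by (apply Rinv_0_lt_compat; auto).
  rewrite <- (Rinv_inv eps). apply Rinv_lt_contravar; [apply Rmult_lt_0_compat|]; rewrite ?S_INR; lra.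
Qed.

Lemma dd_cont x eps : 0 < eps -> exists W, is_open t W /\ W x /\ forall y, W y -> dd x y < eps.
Proof.
  intros He. destruct (classic (isolated t x)) as [Hi|Hi].
  { exists (fun y => y = x). split; auto; split; auto. intros y ->. rewrite dd_refl; auto. }
  destruct (nat_large (eps / 2)) as [N HN]; [lra|].
  destruct (fin_inter t x (fun n W => forall y, W y -> forall m B, (m < N)%nat -> Bs n B ->
       Rabs (hh n m B x - hh n m B y) <= eps / 2) (seq 0 N)) as [W [HW [Wx HP]]].
  - intros a W1 W2 H1 H12 y Wy; apply H1; auto.
  - intros n _. destruct (Hlf n x Hi) as [W0 [HW0 [W0x [l Hl]]]].
    destruct (fin_inter t x (fun p W => forall y, W y -> Bs n (snd p) ->
        Rabs (hh n (fst p) (snd p) x - hh n (fst p) (snd p) y) <= eps / 2) (list_prod (seq 0 N) l))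
      as [W1 [HW1 [W1x HP1]]].
    + intros a W1 W2 H1 H12 y Wy; apply H1; auto.
    + intros [m B] _. simpl. destruct (classic (Bs n B)) as [HB|HB].
      * destruct (hh_spec n m B HB) as [_ [_ [_ Hc]]].
        destruct (Hc x (eps / 2)) as [W2 [HW2 [W2x HW2c]]]; [lra|].
        exists W2; split; auto; split; auto. intros y Wy _. rewrite Rabs_minus_sym. apply Rlt_le; auto.
      * exists (fun _ => True); split; [apply open_full|]; split; auto. intros; contradiction.
    + exists (fun y => W0 y /\ W1 y). split; [apply open_inter; auto|]; split; auto.
      intros y [W0y W1y] m B Hm HB. destruct (classic (In B l)) as [Hin|Hnin].
      * apply (HP1 (m, B)); auto. apply in_prod; auto. apply in_seq; lia.
      * assert (~ meets B W0) as Hnm by (intro; apply Hnin; apply Hl; auto).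
        destruct (hh_spec n m B HB) as [_ [_ [H0 _]]].
        rewrite (H0 x), (H0 y); [rewrite Rminus_0_r, Rabs_R0; lra| |];
          intro Hb; apply Hnm; eexists; split; eauto.
  - exists W; split; auto; split; auto. intros y Wy.
    apply Rle_lt_trans with (eps / 2); [|lra]. apply dd_le.
    intros r [->|[n [m [B [HB ->]]]]]; [lra|].
    destruct (Nat.lt_ge_cases n N) as [Hn|Hn]; [destruct (Nat.lt_ge_cases m N) as [Hm|Hm]|].
    + assert (A := HP n ltac:(apply in_seq; lia) y Wy m B Hm HB).
      unfold term, Rdiv. assert (P := INR_S_pos (n + m)).
      apply Rle_trans with (Rabs (hh n m B x - hh n m B y) * 1); [|lra].
      apply Rmult_le_compat_l; [apply Rabs_pos|]. rewrite <- Rinv_1. apply Rinv_le_contravar; lra.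
    + destruct (term_bounds n m B x y HB). apply Rle_trans with (/ INR (S (n + m))); auto.
      apply Rlt_le, Rle_lt_trans with (/ INR (S N)); auto.
      apply Rinv_le_contravar; [assert (P := INR_S_pos N); lra|]. apply le_INR; lia.
    + destruct (term_bounds n m B x y HB). apply Rle_trans with (/ INR (S (n + m))); auto.
      apply Rlt_le, Rle_lt_trans with (/ INR (S N)); auto.
      apply Rinv_le_contravar; [assert (P := INR_S_pos N); lra|]. apply le_INR; lia.
Qed.

Lemma metrizable_of_base : metrizable t.
Proof.
  exists dd. split.
  - split; [|split].
    + intros x y; split; [apply dd_sep|intros ->; apply dd_refl].
    + intros x y; apply Rle_antisym; apply dd_sym_le.
    + apply dd_tri.
  - intros U; split.
    + intros HU x Ux. destruct (base_pt U x HU Ux) as [n [m [B [HB [HBU Hx]]]]].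
      assert (P := INR_S_pos (n + m)).
      exists (/ INR (S (n + m))). split; [apply Rinv_0_lt_compat; lra|].
      intros y Hy. apply HBU. apply NNPP; intro nBy.
      destruct (hh_spec n m B HB) as [_ [_ [H0 _]]].
      assert (T := dd_term n m B x y HB). unfold term in T. rewrite Hx, (H0 y nBy) in T.
      rewrite Rminus_0_r, Rabs_R1 in T. unfold Rdiv in T. lra.
    + intros HU. apply open_local. intros x Ux. destruct (HU x Ux) as [eps [He Heps]].
      destruct (dd_cont x eps He) as [W [HW [Wx HWd]]]. exists W; split; auto.
Qed.

End Metr.

Section Stone.
Context {X : Type} (t : topology X) (d : X -> X -> R).
Hypothesis Hd : is_metric d.
Hypothesis Htop : forall U, is_open t U <-> metric_open d U.
Variable Rw : X -> X -> Prop.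
Hypothesis Rtot : forall x y, Rw x y \/ Rw y x.
Hypothesis Ranti : forall x y, Rw x y -> Rw y x -> x = y.
Hypothesis Rmin : forall P : X -> Prop, (exists x, P x) -> exists z, P z /\ forall y, P y -> Rw z y.

Lemma d_sym x y : d x y = d y x.
Proof. apply Hd. Qed.
Lemma d_tri x y z : d x z <= d x y + d y z.
Proof. apply Hd. Qed.
Lemma d_refl x : d x x = 0.
Proof. apply Hd; auto. Qed.
Lemma d_pos x y : 0 <= d x y.
Proof. assert (H := d_tri x y x). rewrite d_refl, (d_sym y x) in H. lra. Qed.

Lemma ball_open x r : is_open t (fun y => d x y < r).
Proof.
  apply Htop. intros y Hy. exists (r - d x y); split; [lra|].
  intros z Hz. assert (H := d_tri x y z). lra.
Qed.

Definition rr n := / INR (S n).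
Lemma rr_pos n : 0 < rr n.
Proof. unfold rr. apply Rinv_0_lt_compat. rewrite S_INR. assert (0 <= INR n) by apply pos_INR. lra. Qed.

Definition LC r x s := d s x < r /\ forall s', d s' x < r -> Rw s s'.
Definition VV r e s := fun y => exists x, LC r x s /\ (forall z, d x z < 3 * e -> d s z < r) /\ d x y < e.

Definition SB (k : nat) (A : X -> Prop) : Prop :=
  exists s, A = VV (rr (fst (of_nat k))) (rr (snd (of_nat k))) s.

Lemma VV_open r e s : is_open t (VV r e s).
Proof.
  apply Htop. intros y [x [H1 [H2 H3]]]. exists (e - d x y); split; [lra|].
  intros z Hz. exists x; split; auto; split; auto. assert (H := d_tri x y z). lra.
Qed.

Lemma VV_sub r e s y : 0 < e -> VV r e s y -> d s y < r.
Proof. intros He [x [H1 [H2 H3]]]. apply H2. lra. Qed.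

Lemma disc_half r e s s' y1 y2 : VV r e s y1 -> VV r e s' y2 -> d y1 y2 < e -> Rw s s' -> s = s'.
Proof.
  intros [x1 [L1 [H1 D1]]] [x2 [L2 [H2 D2]]] D Rss'.
  assert (d s x2 < r).
  { apply H1. assert (A := d_tri x1 y1 x2). assert (B := d_tri y1 y2 x2).
    rewrite (d_sym y2 x2) in B. lra. }
  apply Ranti; auto. apply (proj2 L2); auto.
Qed.

Lemma disc_core r e s s' y1 y2 : VV r e s y1 -> VV r e s' y2 -> d y1 y2 < e -> s = s'.
Proof.
  intros H1 H2 D. destruct (Rtot s s').
  - eapply disc_half; eauto.
  - symmetry. eapply disc_half; eauto. rewrite d_sym; auto.
Qed.

Lemma stone_base : is_base t (sigma_union SB) /\ forall i, discrete_nonisol t (SB i).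
Proof.
  split; [split|].
  - intros U [k [s ->]]. apply VV_open.
  - intros U x HU Ux. destruct (proj1 (Htop U) HU x Ux) as [eps [He Heps]].
    destruct (nat_large (eps / 2)) as [n Hn]; [lra|].
    destruct (Rmin (fun s => d s x < rr n)) as [s [Hs Hsmin]].
    { exists x. rewrite d_refl. apply rr_pos. }
    destruct (nat_large ((rr n - d s x) / 3)) as [i Hi]; [lra|].
    exists (VV (rr n) (rr i) s). split; [|split].
    + exists (to_nat (n, i)), s. unfold SB. rewrite cancel_of_to. reflexivity.
    + exists x. split; [split; auto|]. split.
      * intros z Hz. assert (A := d_tri s x z). unfold rr in *. lra.
      * rewrite d_refl. apply rr_pos.
    + intros y Hy. apply Heps. assert (A := VV_sub _ _ _ _ (rr_pos i) Hy).
      assert (B := d_tri x s y). rewrite (d_sym x s) in B. unfold rr in *. lra.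
  - intros k z _. set (e := rr (snd (of_nat k))).
    exists (fun y => d z y < e / 2). split; [apply ball_open|]. split.
    { rewrite d_refl. assert (0 < e) by apply rr_pos. lra. }
    intros A B [s ->] [s' ->] [y1 [A1 W1]] [y2 [B2 W2]].
    assert (s = s') as ->; auto.
    eapply disc_core; eauto. assert (T := d_tri y1 z y2). rewrite (d_sym y1 z) in T. fold e in W1, W2 |- *. lra.
Qed.

End Stone.

Lemma stone_dir {X} (t : topology X) : metrizable t -> has_sigma_discrete_base_nonisol t.
Proof.
  intros [d [Hd Htop]]. destruct (WO.wo_exists X) as [Rw [Rtot [Ranti Rmin]]].
  exists (SB d Rw). apply stone_base; auto.
Qed.

Lemma disc_lf {X} (t : topology X) : has_sigma_discrete_base_nonisol t -> has_sigma_locally_finite_base_nonisol t.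
Proof.
  intros [Bs [Hb Hd]]. exists Bs; split; auto. intros i x Hx.
  destruct (Hd i x Hx) as [W [HW [Wx HWd]]]. exists W; split; auto; split; auto.
  destruct (classic (exists A, Bs i A /\ meets A W)) as [[A [HA HAm]]|Hn].
  - exists (A :: nil). intros B HB HBm. left. apply (HWd A B); auto.
  - exists nil. intros B HB HBm. exfalso; apply Hn; exists B; auto.
Qed.

Lemma lf_metr {X} (t : topology X) : T1_space t -> regular_space t ->
  has_sigma_locally_finite_base_nonisol t -> metrizable t.
Proof.
  intros HT1 Hreg [Bs [Hb Hlf]]. eapply metrizable_of_base; eauto.
Qed.

Theorem mainTheorem10 (X : Type) (t : topology X) :
  T1_space t -> regular_space t ->
  (metrizable t <-> has_sigma_discrete_base_nonisol t) /\
  (metrizable t <-> has_sigma_locally_finite_base_nonisol t).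
Proof.
  intros HT1 Hreg. split; split.
  - apply stone_dir.
  - intros H. apply lf_metr; auto. apply disc_lf; auto.
  - intros H. apply disc_lf, stone_dir; auto.
  - apply lf_metr; auto.
Qed.
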